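(* Let $n$ be a positive integer and let $\mathbb{F}$ be a field with $\operatorname{char}(\mathbb{F})\neq 2$ and $|\mathbb{F}|\geq n^2+1$. Let $\Sigma_n$ denote the set of all $n\times n$ symmetric matrices over $\mathbb{F}$. Let $\psi:\Sigma_n\to\Sigma_n$ be a map, and let $\chi$ be a map from the set of all invertible matrices in $\Sigma_n$ into $\Sigma_n$. If $\operatorname{tr}(xy)=\operatorname{tr}(\chi(x)\psi(y))$ for every invertible $x\in\Sigma_n$ and every $y\in\Sigma_n$, then $\psi$ is linear. *)

(* Defs.v *)
From mathcomp Require Import all_boot all_algebra.
Set Implicit Arguments. Unset Strict Implicit. Unset Printing Implicit Defensive.
Import GRing.Theory.
Local Open Scope ring_scope.

Definition symmx (F : fieldType) (n : nat) (A : 'M[F]_n) : bool := A^T == A.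

(* |F| >= m : F contains at least m pairwise distinct elements
   (also covers infinite fields) *)
Definition card_ge (F : fieldType) (m : nat) : Prop :=
  exists s : seq F, uniq s /\ (m <= size s)%N.

(* Main.v *)
Require Import Defs.
From mathcomp Require Import all_boot all_algebra.
From mathcomp Require Import ring.
Import GRing.Theory.
Local Open Scope ring_scope.

Section Aux.
Variables (F : fieldType) (n : nat).
Hypothesis h2 : (2%:R : F) != 0.
Local Notation m := (n * n)%N.

Lemma mxvec_index_inj (i j i' j' : 'I_n) :
  (mxvec_index i j == mxvec_index i' j') = ((i, j) == (i', j')).
Proof. by apply/eqP/eqP => [/cast_ord_inj/enum_rank_inj|[-> ->]]. Qed.

Lemma dotV (A B : 'M[F]_n) :
  \sum_k mxvec A 0 k * mxvec B 0 k = \sum_i \sum_j A i j * B i j.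
Proof.
rewrite pair_big /= (reindex (uncurry (@mxvec_index n n))) /=; last first.
  exact: curry_mxvec_bij.
by apply: eq_bigr => [[i j]] _; rewrite /= !mxvecE.
Qed.

Lemma trV (A B : 'M[F]_n) :
  \tr (A *m B^T) = \sum_k mxvec A 0 k * mxvec B 0 k.
Proof.
rewrite dotV /mxtrace; apply: eq_bigr => i _; rewrite mxE.
by apply: eq_bigr => j _; rewrite mxE.
Qed.

Definition T : 'M[F]_m := lin_mx (@trmx F n n).
Definition S : 'M[F]_m := 1%:M + T.

Lemma mulVT (A : 'M[F]_n) : mxvec A *m T = mxvec A^T.
Proof. by rewrite mul_vec_lin. Qed.

Lemma mulVS (A : 'M[F]_n) : mxvec A *m S = mxvec (A + A^T).
Proof. by rewrite mulmxDr mulmx1 mulVT linearD. Qed.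

Lemma TT : T *m T = 1%:M.
Proof.
apply/row_matrixP => i; rewrite !rowE mulmxA -[delta_mx 0 i]vec_mxK !mulVT.
by rewrite trmxK mulmx1.
Qed.

Lemma trT : T^T = T.
Proof.
have E : forall k l : 'I_m, T k l = (row k T) 0 l.
  by move=> k l; rewrite [RHS]mxE; reflexivity.
apply/matrixP => k l; rewrite mxE.
case/mxvec_indexP: k => i j; case/mxvec_indexP: l => i' j'.
rewrite !E !rowE -!mxvec_delta !mulVT !trmx_delta !mxvec_delta !mxE /=.
rewrite !mxvec_index_inj /=.
by congr (_%:R); rewrite !xpair_eqE andbC; congr (_ && _); rewrite eq_sym.
Qed.

Lemma SS : S *m S = 2%:R *: S.
Proof.
rewrite /S mulmxDl !mulmxDr TT !mul1mx mulmx1 scalerDr !scaler_nat !mulr2n.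
by rewrite addrA addrAC (addrC T) addrA (addrAC 1%:M T).
Qed.

Lemma trS : S^T = S.
Proof. by rewrite /S linearD /= tr_scalar_mx trT. Qed.

Lemma symS (A : 'M[F]_n) : A^T = A -> (mxvec A <= S)%MS.
Proof.
move=> hA; apply/submxP; exists ((2%:R)^-1 *: mxvec A).
by rewrite -scalemxAl mulVS hA linearD -mulr2n -scaler_nat scalerA mulVf // scale1r.
Qed.

Lemma Ssym (u : 'rV[F]_m) : (u <= S)%MS -> (vec_mx u)^T = vec_mx u.
Proof.
by case/submxP => b ->; rewrite -[b]vec_mxK mulVS mxvecK linearD /= trmxK addrC.
Qed.

Lemma unit_shift (A : 'M[F]_n) (s : seq F) : uniq s -> (n < size s)%N ->
  exists c, A + c%:M \in unitmx.
Proof.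
move=> us hs; set p := char_poly (- A).
have : ~~ all (root p) s.
  apply/negP => hall.
  have hp0 : p != 0 by rewrite -size_poly_gt0 size_char_poly.
  have := max_poly_roots hp0 hall us.
  by rewrite size_char_poly ltnS leqNgt hs.
case/allPn => c _ hc; exists c.
rewrite unitmxE unitfE; apply: contra hc => /eqP hd.
apply/eqP; rewrite /p /char_poly -horner_evalE -det_map_mx -[RHS]hd; congr (\det _).
apply/matrixP => i j; rewrite !mxE /= horner_evalE !hornerE.
by case: (i == j); rewrite /= ?mulr1n ?mulr0n ?hornerE opprK // addrC.
Qed.

End Aux.

Theorem lemma2p2 (F : fieldType) (n : nat) (hn : (0 < n)%N)
  (hchar : (2%:R : F) != 0) (hcard : card_ge F (n ^ 2).+1)
  (psi chi : 'M[F]_n -> 'M[F]_n)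
  (hpsi : forall y, symmx y -> symmx (psi y))
  (hchi : forall x, symmx x -> x \in unitmx -> symmx (chi x))
  (htr : forall x y, symmx x -> x \in unitmx -> symmx y ->
           \tr (x *m y) = \tr (chi x *m psi y)) :
  forall (a b : F) (x y : 'M[F]_n), symmx x -> symmx y ->
    psi (a *: x + b *: y) = a *: psi x + b *: psi y.
Proof.
move=> a b x y hx hy.
have symE : forall A : 'M[F]_n, symmx A -> A^T = A by move=> A /eqP.
case: hcard => s [us hs].
have hs' : (n < size s)%N.
  apply: leq_trans hs; rewrite ltnS expnS expn1; exact: leq_pmulr.
set m := (n * n)%N.
have cs : forall k : 'I_m, exists c, vec_mx (row k (S F n)) + c%:M \in unitmx.
  by move=> k; apply: unit_shift us hs'.
pose c k := xchoose (cs k).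
pose xs (r : 'I_m.+1) : 'M[F]_n :=
  if unlift ord0 r is Some k then vec_mx (row k (S F n)) + (c k)%:M else 1%:M.
have xsS : forall r, symmx (xs r).
  move=> r; rewrite /xs /symmx; case: (unlift ord0 r) => [k|]; last first.
    by rewrite tr_scalar_mx.
  by rewrite linearD /= tr_scalar_mx Ssym // row_sub.
have xsU : forall r, xs r \in unitmx.
  move=> r; rewrite /xs; case: (unlift ord0 r) => [k|]; last exact: unitmx1.
  exact: (xchooseP (cs k)).
pose X := \matrix_r mxvec (xs r).
pose C := \matrix_r mxvec (chi (xs r)).
pose P := \matrix_(k < m) mxvec (psi (vec_mx (row k (S F n)))).
have key : X *m (S F n)^T = C *m P^T.
  apply/matrixP => r k; rewrite !mxE.
  have hY : symmx (vec_mx (row k (S F n))) by apply/eqP; rewrite Ssym // row_sub.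
  transitivity (\tr (xs r *m (vec_mx (row k (S F n)))^T)).
    rewrite trV vec_mxK; apply: eq_bigr => j _; rewrite !mxE; reflexivity.
  have hP := symE _ (hpsi _ hY).
  rewrite symE // htr // -{1}hP.
  rewrite trV; apply: eq_bigr => j _; rewrite !mxE; reflexivity.
have SX : (S F n <= X)%MS.
  apply/row_subP => k.
  have -> : row k (S F n) = mxvec (xs (lift ord0 k)) + (- c k) *: mxvec (xs ord0).
    rewrite /xs liftK unlift_none /= [mxvec (_ + _)]linearD /= vec_mxK.
    by rewrite -[(c k)%:M]scalemx1 [mxvec (_ *: _)]linearZ /= scaleNr addrK.
  by rewrite addmx_sub ?scalemx_sub // -(rowK (fun r => mxvec (xs r))) row_sub.
have CS : (C <= S F n)%MS.
  apply/row_subP => r; rewrite rowK; apply: symS => //; apply/eqP; exact: hchi.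
have rk : (\rank (S F n) <= \rank C)%N.
  case/submxP: SX => D hD.
  have e : S F n *m (S F n)^T = D *m (C *m P^T) by rewrite -key mulmxA -hD.
  rewrite -(mxrank_scale_nz (S F n) hchar) -SS // -[X in S F n *m X]trS // e.
  apply: leq_trans (mxrankM_maxr _ _) _; exact: mxrankM_maxl.
have SC : (S F n <= C)%MS.
  by rewrite -(mxrank_leqif_sup CS).2 eqn_leq rk mxrankS.
set w := psi (a *: x + b *: y) - a *: psi x - b *: psi y.
have hxy : symmx (a *: x + b *: y).
  by apply/eqP; rewrite linearD /= !linearZ /= !symE.
have hw : symmx w.
  by apply/eqP; rewrite /w !linearB /= !linearZ /= !symE //; apply: hpsi.
set z := mxvec w.
have hz : C *m z^T = 0.
  apply/matrixP => r j; rewrite (ord1 j) !mxE.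
  transitivity (\tr (chi (xs r) *m w^T)).
    rewrite trV; apply: eq_bigr => k _; rewrite !mxE; reflexivity.
  rewrite symE // /w !mulmxBr -!scalemxAr !linearB /= !linearZ /= -!htr //.
  rewrite mulmxDr -!scalemxAr linearD /= !linearZ /=.
  ring.
have hSz : S F n *m z^T = 0.
  by case/submxP: SC => D ->; rewrite -mulmxA hz mulmx0.
have hzS : z *m S F n = 0.
  by apply: trmx_inj; rewrite trmx_mul trS hSz linear0.
move: hzS; rewrite /z mulVS symE // linearD /= -mulr2n -scaler_nat => /eqP.
rewrite scaler_eq0 (negbTE hchar) /= => /eqP hw0.
have w0 : w = 0 by rewrite -[w]mxvecK hw0 linear0.
by apply: subr0_eq; rewrite opprD addrA.
Qed.
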